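(* Let $d\ge 3$ be an integer such that $d$ is odd or $d\equiv 0\pmod 4$. Then the hypercube $Q_d$ is $\mathbb{Z}_2^d$-distance antimagic.
   Context: $Q_d$ is the graph with vertex set $\mathbb{Z}_2^d$ (binary strings of length $d$), two vertices adjacent iff they differ in exactly one coordinate. For a graph $G$ with $n$ vertices and an Abelian group $A$ of order $n$ (written additively), and a bijection $f:V(G)\to A$, the weight of $x$ is $w_f(x)=\sum_{y\in N(x)} f(y)$ computed in $A$ ($N(x)$ the open neighbourhood). $f$ is an $A$-distance antimagic labelling if all weights are pairwise distinct; $G$ is $A$-distance antimagic if it admits such a labelling. *)

(* Defs.v *)
From HB Require Import structures.
From mathcomp Require Import all_boot all_order all_algebra.
Set Implicit Arguments. Unset Strict Implicit. Unset Printing Implicit Defensive.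
Import GRing.Theory.
Local Open Scope ring_scope.

Definition weight (V : finType) (A : zmodType) (adj : rel V) (f : V -> A) (x : V) : A :=
  \sum_(y | adj x y) f y.

Definition distance_antimagic_labelling (V : finType) (A : finZmodType)
    (adj : rel V) (f : V -> A) : Prop :=
  bijective f /\ injective (weight adj f).

Definition distance_antimagic (V : finType) (A : finZmodType) (adj : rel V) : Prop :=
  #|V| = #|A| /\ exists f : V -> A, distance_antimagic_labelling adj f.

Definition Z2d (d : nat) := 'rV['Z_2]_d.

Definition hypercube_adj (d : nat) : rel (Z2d d) :=
  fun x y => #|[set i : 'I_d | x ord0 i != y ord0 i]| == 1%N.

Arguments distance_antimagic : clear implicits.

(* Main.v *)
Require Import Defs.
From mathcomp Require Import all_boot all_order all_algebra zify.
Import GRing.Theory.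
Local Open Scope ring_scope.
Definition b2z (b : bool) : 'Z_2 := if b then 1 else 0.
Definition code (a b c e : 'Z_2) : nat := (a + 2 * b + 4 * c + 8 * e)%N.
Definition bitof (r n : nat) : 'Z_2 := b2z (odd (n %/ 2 ^ r)).
Definition tabG : seq nat := [:: 3; 11; 7; 13; 2; 10; 6; 14; 8; 5; 0; 15; 1; 12; 9; 4]%N.
Definition tabH : seq nat := [:: 10; 12; 4; 0; 15; 9; 6; 2; 8; 14; 5; 1; 13; 3; 7; 11]%N.
Definition tabV : seq nat := [:: 9; 1; 6; 14; 15; 7; 0; 8; 2; 10; 13; 5; 11; 3; 4; 12]%N.
Definition G r a b c e := bitof r (nth 0%N tabG (code a b c e)).
Definition H r a b c e := bitof r (nth 0%N tabH (code a b c e)).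
Definition V r a b c e := bitof r (nth 0%N tabV (code a b c e)).
Definition WG r (a b c e : 'Z_2) := G r (a+1) b c e + G r a (b+1) c e + G r a b (c+1) e + G r a b c (e+1).
Definition sel (r : nat) (a b c e : 'Z_2) := match r with 0 => a | 1 => b | 2 => c | _ => e end.


Lemma Z2cases (a : 'Z_2) : a = 0 \/ a = 1.
Proof. case: a => [[|[|n]]] H; [left|right|]; try exact: val_inj. by []. Qed.

Lemma Z2_neq (a b : 'Z_2) : a != b -> b = a + 1.
Proof. by case: (Z2cases a) => ->; case: (Z2cases b) => ->; move=> H; apply/eqP. Qed.

Lemma Z2_addxx (a : 'Z_2) : a + a = 0.
Proof. by case: (Z2cases a) => ->; apply/eqP. Qed.

Lemma Z2_neq1 (a : 'Z_2) : a != a + 1.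
Proof. by case: (Z2cases a) => ->. Qed.

Lemma Z2_mulrn_even (a : 'Z_2) n : ~~ odd n -> a *+ n = 0.
Proof.
move=> Hn; rewrite -(odd_double_half n) (negbTE Hn) add0n -muln2 mulnC mulrnA.
by rewrite mulr2n Z2_addxx mul0rn.
Qed.

Lemma mx_addxx d (x : Z2d d) : x + x = 0.
Proof. by apply/matrixP => i j; rewrite !mxE Z2_addxx. Qed.

Lemma adjE d (x y : Z2d d) :
  hypercube_adj x y = (y \in [set x + delta_mx 0 i | i : 'I_d]).
Proof.
apply/idP/imsetP.
- move/cards1P => [i Hi]; exists i => //.
  apply/matrixP => p q; rewrite (ord1 p) !mxE eqxx /=.
  move/setP: Hi => /(_ q); rewrite !inE.
  case: (q =P i) => [-> | _] /=.
  + by move/Z2_neq.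
  + by move/negbFE/eqP => ->; rewrite addr0.
- move=> [i _ ->]; apply/cards1P; exists i; apply/setP => q.
  rewrite !inE !mxE eqxx /=; case: (q =P i) => [-> | _] /=.
  + by rewrite Z2_neq1.
  + by rewrite addr0 eqxx.
Qed.

Lemma weightE d (f : Z2d d -> Z2d d) x :
  weight (@hypercube_adj d) f x = \sum_(i < d) f (x + delta_mx 0 i).
Proof.
rewrite /weight (eq_bigl (fun y => y \in [set x + delta_mx 0 i | i : 'I_d])).
  2: by move=> y; rewrite adjE.
rewrite big_imset /=.
  by apply: eq_bigl => i; rewrite inE.
move=> i j _ _ /addrI /matrixP /(_ 0 j); rewrite !mxE !eqxx /=.
by case: (j =P i) => // _ /eqP.
Qed.
Lemma GH r : (r < 4)%N -> forall a b c e,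
  G r (H 0 a b c e) (H 1 a b c e) (H 2 a b c e) (H 3 a b c e) = sel r a b c e.
Proof.
case: r => [|[|[|[|r]]]] // _ a b c e;
case: (Z2cases a) => ->; case: (Z2cases b) => ->; case: (Z2cases c) => ->; case: (Z2cases e) => ->;
apply/eqP; by [].
Qed.
Lemma HG r : (r < 4)%N -> forall a b c e,
  H r (G 0 a b c e) (G 1 a b c e) (G 2 a b c e) (G 3 a b c e) = sel r a b c e.
Proof.
case: r => [|[|[|[|r]]]] // _ a b c e;
case: (Z2cases a) => ->; case: (Z2cases b) => ->; case: (Z2cases c) => ->; case: (Z2cases e) => ->;
apply/eqP; by [].
Qed.
Lemma VW r : (r < 4)%N -> forall a b c e,
  V r (WG 0 a b c e) (WG 1 a b c e) (WG 2 a b c e) (WG 3 a b c e) = sel r a b c e.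
Proof.
case: r => [|[|[|[|r]]]] // _ a b c e;
case: (Z2cases a) => ->; case: (Z2cases b) => ->; case: (Z2cases c) => ->; case: (Z2cases e) => ->;
apply/eqP; by [].
Qed.
Lemma mx_mulrn_odd d (x : Z2d d) n : odd n -> x *+ n = x.
Proof.
move=> Hn; rewrite -(odd_double_half n) Hn -muln2 mulrnDr mulr1n mulnC mulrnA.
by rewrite mulr2n mx_addxx mul0rn ?add0r ?addr0.
Qed.

Lemma odd_case d : odd d -> distance_antimagic (Z2d d) (Z2d d) (@hypercube_adj d).
Proof.
move=> Hd; split => //; exists id; split; first by exists id.
have E : forall x : Z2d d, weight (@hypercube_adj d) id x = x + \sum_(i < d) delta_mx 0 i.
  move=> x; rewrite weightE big_split /= sumr_const card_ord.
  by rewrite mx_mulrn_odd.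
by move=> x y; rewrite !E => /addIr.
Qed.
Set Implicit Arguments. Unset Strict Implicit. Unset Printing Implicit Defensive.
Definition blk d (j : 'I_d) (k : nat) : 'I_d := insubd j (j - j %% 4 + k)%N.
Definition xs d (x : Z2d d) (j : 'I_d) k := x 0 (blk j k).
Definition F d (x : Z2d d) : Z2d d :=
  \row_j G (j %% 4) (xs x j 0) (xs x j 1) (xs x j 2) (xs x j 3).
Definition Fi d (x : Z2d d) : Z2d d :=
  \row_j H (j %% 4) (xs x j 0) (xs x j 1) (xs x j 2) (xs x j 3).

Section Even.
Variable d : nat.
Hypothesis Hd : (d %% 4 = 0)%N.

Lemma blk_val (j : 'I_d) k : (k < 4)%N -> val (blk j k) = (j - j %% 4 + k)%N.
Proof.
move=> Hk; rewrite val_insubd; case: ifP => // /negbT; have := ltn_ord j.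
move: (nat_of_ord j) => n Hn; rewrite -leqNgt => H; exfalso; lia.
Qed.

Lemma blk_blk (j : 'I_d) k k' : (k < 4)%N -> (k' < 4)%N -> blk (blk j k) k' = blk j k'.
Proof.
move=> Hk Hk'; apply: val_inj; rewrite !blk_val //; move: (nat_of_ord j) => n; lia.
Qed.

Lemma blk_mod (j : 'I_d) k : (k < 4)%N -> (blk j k %% 4 = k)%N.
Proof. move=> Hk; rewrite blk_val //; move: (nat_of_ord j) => n. clear -Hk; lia. Qed.

Lemma blk_self (j : 'I_d) : blk j (j %% 4) = j.
Proof. apply: val_inj => /=; rewrite blk_val ?ltn_pmod //; move: (nat_of_ord j) => n; lia. Qed.

Lemma blk_eq (j : 'I_d) k k' : (k < 4)%N -> (k' < 4)%N -> (blk j k == blk j k') = (k == k')%N.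
Proof.
move=> Hk Hk'; rewrite -val_eqE !blk_val //; apply/eqP/eqP; move: (nat_of_ord j) => n; lia.
Qed.

Lemma xs_blk (x : Z2d d) (j : 'I_d) k k' : (k < 4)%N -> (k' < 4)%N -> xs x (blk j k) k' = xs x j k'.
Proof. by move=> Hk Hk'; rewrite /xs blk_blk. Qed.

Lemma sel_xs (x : Z2d d) (j : 'I_d) : sel (j %% 4) (xs x j 0) (xs x j 1) (xs x j 2) (xs x j 3) = x 0 j.
Proof.
transitivity (xs x j (j %% 4)); last by rewrite /xs blk_self.
have : (j %% 4 < 4)%N by rewrite ltn_pmod.
by case: (j %% 4)%N => [|[|[|[|r]]]].
Qed.

Lemma FK : cancel (@F d) (@Fi d).
Proof.
move=> x; apply/matrixP => i j; rewrite (ord1 i) mxE /xs !mxE -!/(xs _ _ _) !blk_mod // !xs_blk //.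
by rewrite HG ?ltn_pmod // sel_xs.
Qed.

Lemma FiK : cancel (@Fi d) (@F d).
Proof.
move=> x; apply/matrixP => i j; rewrite (ord1 i) mxE /xs !mxE -!/(xs _ _ _) !blk_mod // !xs_blk //.
by rewrite GH ?ltn_pmod // sel_xs.
Qed.


Lemma d_even : ~~ odd d.
Proof. by rewrite (divn_eq d 4) Hd addn0 oddM andbF. Qed.

Lemma weight_even (x : Z2d d) (j : 'I_d) :
  weight (@hypercube_adj d) (@F d) x 0 j =
  WG (j %% 4) (xs x j 0) (xs x j 1) (xs x j 2) (xs x j 3).
Proof.
rewrite weightE summxE.
set r := (j %% 4)%N.
set a0 := xs x j 0; set a1 := xs x j 1; set a2 := xs x j 2; set a3 := xs x j 3.
set c := G r a0 a1 a2 a3.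
have T : forall i, F (x + delta_mx 0 i) 0 j = c + \sum_(k < 4) (blk j k == i)%:R *
   (G r (a0 + (k == 0%N :> nat)%:R) (a1 + (k == 1%N :> nat)%:R)
        (a2 + (k == 2%N :> nat)%:R) (a3 + (k == 3%N :> nat)%:R) - c).
  move=> i; rewrite mxE /xs !mxE !eqxx /= -/r.
  case: (pickP (fun k : 'I_4 => blk j k == i)) => [k0 /eqP <- | Hn].
  - rewrite (bigD1 k0) //= eqxx mul1r big1 ?addr0; last first.
      move=> k Hk; rewrite blk_eq ?ltn_ord //.
      have /negbTE := Hk; rewrite -val_eqE /= => ->; by rewrite mul0r.
    rewrite !blk_eq ?ltn_ord // [c + _]addrC subrK.
    by rewrite ![(_ == nat_of_ord k0)%N]eq_sym.
  - rewrite big1 ?addr0; last by move=> k _; rewrite Hn mul0r.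
    have H0 := Hn (@Ordinal 4 0 isT); have H1 := Hn (@Ordinal 4 1 isT);
    have H2 := Hn (@Ordinal 4 2 isT); have H3 := Hn (@Ordinal 4 3 isT).
    by rewrite /= in H0 H1 H2 H3; rewrite H0 H1 H2 H3 !addr0.
rewrite (eq_bigr _ (fun i _ => T i)) big_split /= sumr_const card_ord.
rewrite Z2_mulrn_even ?d_even // add0r exchange_big /=.
rewrite (eq_bigr (fun k : 'I_4 => G r (a0 + (k == 0%N :> nat)%:R) (a1 + (k == 1%N :> nat)%:R)
        (a2 + (k == 2%N :> nat)%:R) (a3 + (k == 3%N :> nat)%:R) - c)); last first.
  move=> k _; rewrite -mulr_suml (bigD1 (blk j k)) //= eqxx big1 ?addr0 ?mul1r //.
  by move=> i; rewrite eq_sym => /negbTE ->.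
rewrite sumrB sumr_const card_ord Z2_mulrn_even // subr0.
rewrite !big_ord_recr big_ord0 /= add0r /WG.
by rewrite !addr0.
Qed.

Lemma weight_inj : injective (weight (@hypercube_adj d) (@F d)).
Proof.
move=> x y E; apply/matrixP => i j; rewrite (ord1 i).
have Hr : (j %% 4 < 4)%N by rewrite ltn_pmod.
have Ek : forall k, (k < 4)%N -> WG k (xs x j 0) (xs x j 1) (xs x j 2) (xs x j 3)
                     = WG k (xs y j 0) (xs y j 1) (xs y j 2) (xs y j 3).
  move=> k Hk; have := congr1 (fun M : Z2d d => M 0 (blk j k)) E.
  by rewrite /= !weight_even !blk_mod // !xs_blk.
rewrite -(sel_xs x) -(sel_xs y) -(VW _ Hr) -(VW _ Hr) !Ek //.
Qed.

End Even.

Theorem mainTheorem8 (d : nat) :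
  (3 <= d)%N -> (odd d \/ d %% 4 = 0)%N ->
  distance_antimagic (Z2d d) (Z2d d) (@hypercube_adj d).
Proof.
move=> _ [Hd|Hd]; first exact: odd_case.
split => //; exists (@F d); split; last exact: (weight_inj Hd).
by exists (@Fi d); [exact: (FK Hd) | exact: (FiK Hd)].
Qed.
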